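(* Let $\Bbbk$ be a field, $H$ a Hopf $\Bbbk$-algebra with bijective antipode, and $A$ a left $H$-module $\Bbbk$-algebra. (a) If the map $\kappa_H\colon\operatorname{Spec} A\to H\text{-}\operatorname{Spec} A$, $P\mapsto P\!:\!H$, is surjective and $A$ has the Jacobson property, then every $H$-locally closed $H$-prime ideal of $A$ is $H$-primitive. (b) If $A$ satisfies the weak Nullstellensatz, then every $H$-primitive ideal of $A$ is $H$-rational.
   Context: A left $H$-module algebra is a $\Bbbk$-algebra $A$ with $1$ that is a left $H$-module via $h\otimes a\mapsto h.a$ such that $h.(ab)=(h_1.a)(h_2.b)$ and $h.1=\varepsilon(h)1$. An $H$-ideal is a two-sided ideal which is an $H$-submodule; an $H$-ideal $I$ is $H$-prime if $A/I\ne0$ and the product of any two nonzero $H$-ideals of $A/I$ is nonzero; $H\text{-}\operatorname{Spec} A$ is the set of $H$-primes. For an ideal $P$, $P\!:\!H=\{a\in A\mid H.a\subseteq P\}$. An $H$-prime $I$ is $H$-locally closed if $I \subsetneq \bigcap\{J\in H\text{-}\operatorname{Spec} A \mid J\supsetneq I\}$ (i.e. $\{I\}$ is locally closed in the topology on $H\text{-}\operatorname{Spec} A$ with closed sets $\{Q\mid Q\supseteq S\}$); $I$ is $H$-primitive if $I=P\!:\!H$ for some primitive ideal $P$ of $A$. For a ring $R$, $\operatorname{Q} R$ is the symmetric (Martindale) ring of quotients, $\mathcal{C} R$ its center, $D_q=\{r\in R\mid qRr\subseteq R,\ rRq\subseteq R\}$; for an $H$-module algebra $B$, $\mathcal{C}^H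 B=\{q\in\mathcal{C} B \mid h.(dq)=(h.d)q,\ h.(qd)=q(h.d)\ \forall h\in H, d\in D_q\}$. An $H$-prime $I$ is $H$-rational if the field $\mathcal{C}^H(A/I)$ is algebraic over $\Bbbk$. $A$ has the Jacobson property if every prime ideal of $A$ is an intersection of primitive ideals. $A$ satisfies the weak Nullstellensatz if for every irreducible left $A$-module $V$ the division algebra $\operatorname{End}_A(V)$ is algebraic over $\Bbbk$. *)

(* Defs.v *)
From mathcomp Require Import all_boot all_order all_algebra.
Set Implicit Arguments. Unset Strict Implicit. Unset Printing Implicit Defensive.
Import GRing.Theory.
Local Open Scope ring_scope.

Definition incl (T : Type) (I J : T -> Prop) : Prop := forall x, I x -> J x.

(* Tensors.  An element of U (x) V is represented by a finite list of pure   *)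
(* tensors  sum_i u_i (x) v_i ; two representatives are equal in U (x) V iff *)
(* every k-bilinear map out of U x V takes the same value on them (universal *)
(* property of the tensor product).  Likewise for U (x) V (x) X.            *)
Section Tensor.
Variable k : fieldType.

Definition bilinear_map (U V W : lmodType k) (f : U -> V -> W) : Prop :=
  (forall (a : k) x y v, f (a *: x + y) v = a *: f x v + f y v) /\
  (forall (a : k) u x y, f u (a *: x + y) = a *: f u x + f u y).

Definition trilinear_map (U V X W : lmodType k) (f : U -> V -> X -> W) : Prop :=
  [/\ (forall (a : k) x y v w, f (a *: x + y) v w = a *: f x v w + f y v w),
      (forall (a : k) u x y w, f u (a *: x + y) w = a *: f u x w + f u y w) &
      (forall (a : k) u v x y, f u v (a *: x + y) = a *: f u v x + f u v y)].

Definition tsum (U V W : lmodType k) (f : U -> V -> W) (t : seq (U * V)) : W :=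
  \sum_(p <- t) f p.1 p.2.
End Tensor.

(* Hopf algebras.  Delta h = sum h_1 (x) h_2 (a representative in H (x) H),  *)
(* eps the counit, S the antipode.                                           *)
Record Hopf_axioms (k : fieldType) (H : algType k)
    (Delta : H -> seq (H * H)) (eps : H -> k) (S : H -> H) : Prop := {
  eps_linear : forall (a : k) x y, eps (a *: x + y) = a * eps x + eps y;
  eps_mul : forall x y, eps (x * y) = eps x * eps y;
  eps_one : eps 1 = 1;
  Delta_linear : forall (W : lmodType k) (f : H -> H -> W), bilinear_map f ->
    forall (a : k) x y,
      tsum f (Delta (a *: x + y)) = a *: tsum f (Delta x) + tsum f (Delta y);
  Delta_mul : forall (W : lmodType k) (f : H -> H -> W), bilinear_map f ->
    forall x y, tsum f (Delta (x * y)) =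
      \sum_(p <- Delta x) \sum_(q <- Delta y) f (p.1 * q.1) (p.2 * q.2);
  Delta_one : forall (W : lmodType k) (f : H -> H -> W), bilinear_map f ->
    tsum f (Delta 1) = f 1 1;
  Delta_coassoc : forall (W : lmodType k) (f : H -> H -> H -> W),
    trilinear_map f -> forall x,
      \sum_(p <- Delta x) \sum_(q <- Delta p.1) f q.1 q.2 p.2 =
      \sum_(p <- Delta x) \sum_(q <- Delta p.2) f p.1 q.1 q.2;
  counit_l : forall x, \sum_(p <- Delta x) eps p.1 *: p.2 = x;
  counit_r : forall x, \sum_(p <- Delta x) eps p.2 *: p.1 = x;
  S_linear : forall (a : k) x y, S (a *: x + y) = a *: S x + S y;
  antipode_l : forall x, \sum_(p <- Delta x) S p.1 * p.2 = (eps x)%:A;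
  antipode_r : forall x, \sum_(p <- Delta x) p.1 * S p.2 = (eps x)%:A
}.

Record module_algebra (k : fieldType) (H : algType k)
    (Delta : H -> seq (H * H)) (eps : H -> k) (A : algType k)
    (act : H -> A -> A) : Prop := {
  act_linear_l : forall (c : k) h g a, act (c *: h + g) a = c *: act h a + act g a;
  act_linear_r : forall (c : k) h a b, act h (c *: a + b) = c *: act h a + act h b;
  act_one : forall a, act 1 a = a;
  act_mul : forall g h a, act (g * h) a = act g (act h a);
  act_prod : forall h a b,
    act h (a * b) = \sum_(p <- Delta h) act p.1 a * act p.2 b;
  act_unit : forall h, act h 1 = eps h *: 1
}.

Section Rings.
Variable R : pzRingType.

Definition is_ideal (I : R -> Prop) : Prop :=
  [/\ I 0, (forall x y, I x -> I y -> I (x + y)) &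
      (forall a x, I x -> I (a * x) /\ I (x * a))].

(* I J is contained in P  (P is closed under finite sums) *)
Definition prod_sub (I J P : R -> Prop) : Prop :=
  forall x y, I x -> J y -> P (x * y).

Definition is_prime_ideal (P : R -> Prop) : Prop :=
  [/\ is_ideal P, ~ P 1 &
      forall I J, is_ideal I -> is_ideal J -> prod_sub I J P ->
        incl I P \/ incl J P].

Definition is_submodule (V : lmodType R) (W : V -> Prop) : Prop :=
  [/\ W 0, (forall x y, W x -> W y -> W (x + y)) &
      (forall (a : R) x, W x -> W (a *: x))].

Definition irreducible_module (V : lmodType R) : Prop :=
  (exists v : V, v != 0) /\
  forall W : V -> Prop, is_submodule W -> (forall v, W v -> v = 0) \/ (forall v, W v).

Definition annihilator (V : lmodType R) : R -> Prop :=
  fun a => forall v : V, a *: v = 0.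

Definition is_primitive_ideal (P : R -> Prop) : Prop :=
  exists V : lmodType R, irreducible_module V /\ forall a, P a <-> annihilator V a.

Definition Jacobson_property : Prop :=
  forall P, is_prime_ideal P ->
    forall a, (forall Q, is_primitive_ideal Q -> incl P Q -> Q a) -> P a.

Definition dense_ideal (I : R -> Prop) : Prop :=
  [/\ is_ideal I,
      (forall x, (forall y, I y -> x * y = 0) -> x = 0) &
      (forall x, (forall y, I y -> y * x = 0) -> x = 0)].

Definition iprod (I J : R -> Prop) : R -> Prop :=
  fun z => exists s : seq (R * R),
    (forall p, p \in s -> I p.1 /\ J p.2) /\ z = \sum_(p <- s) p.1 * p.2.

(* A representative of an element q of Q R: a triple (I, f, g) with I dense, *)
(* f : I -> R a left R-module map (x |-> x q), g : I -> R a right R-module   *)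
(* map (y |-> q y), with (x f) y = x (g y)  (Passman's construction).       *)
Record qrep := QRep { qdom : R -> Prop; qright : R -> R; qleft : R -> R }.

Definition qrep_ok (q : qrep) : Prop :=
  dense_ideal (qdom q) /\
  [/\ (forall x y, qdom q x -> qdom q y -> qright q (x + y) = qright q x + qright q y),
      (forall r x, qdom q x -> qright q (r * x) = r * qright q x),
      (forall x y, qdom q x -> qdom q y -> qleft q (x + y) = qleft q x + qleft q y),
      (forall r x, qdom q x -> qleft q (x * r) = qleft q x * r) &
      (forall x y, qdom q x -> qdom q y -> qright q x * y = x * qleft q y)].

Definition qeq (q1 q2 : qrep) : Prop :=
  exists K, [/\ dense_ideal K, incl K (qdom q1), incl K (qdom q2) &
    forall x, K x -> qright q1 x = qright q2 x /\ qleft q1 x = qleft q2 x].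

Definition qadd (q1 q2 : qrep) : qrep :=
  QRep (fun x => qdom q1 x /\ qdom q2 x)
       (fun x => qright q1 x + qright q2 x) (fun y => qleft q1 y + qleft q2 y).

Definition qmul (q1 q2 : qrep) : qrep :=
  QRep (iprod (qdom q2) (qdom q1))
       (fun x => qright q2 (qright q1 x)) (fun y => qleft q1 (qleft q2 y)).

Definition qemb (r : R) : qrep := QRep (fun _ => True) (fun x => x * r) (fun y => r * y).

Definition qcenter (q : qrep) : Prop :=
  qrep_ok q /\ forall q', qrep_ok q' -> qeq (qmul q q') (qmul q' q).

Definition Dq (q : qrep) : R -> Prop := fun d =>
  (forall r, exists s, qeq (qmul (qmul q (qemb r)) (qemb d)) (qemb s)) /\
  (forall r, exists s, qeq (qmul (qmul (qemb d) (qemb r)) q) (qemb s)).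
End Rings.

Section HRings.
Variables (k : fieldType) (H : algType k).

Definition CH (B : algType k) (actB : H -> B -> B) (q : qrep B) : Prop :=
  qcenter q /\
  forall h d, Dq q d ->
    (forall s, qeq (qmul (qemb d) q) (qemb s) ->
       qeq (qemb (actB h s)) (qmul (qemb (actB h d)) q)) /\
    (forall s, qeq (qmul q (qemb d)) (qemb s) ->
       qeq (qemb (actB h s)) (qmul q (qemb (actB h d)))).

Definition qpeval (B : algType k) (p : {poly k}) (q : qrep B) : qrep B :=
  foldr (fun c acc => qadd (qmul acc q) (qemb (c%:A : B))) (qemb 0) p.

Definition CH_algebraic (B : algType k) (actB : H -> B -> B) : Prop :=
  forall q, CH actB q -> exists p : {poly k}, p != 0 /\ qeq (qpeval p q) (qemb 0).

Variables (A : algType k) (act : H -> A -> A).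

Definition is_H_ideal (I : A -> Prop) : Prop :=
  is_ideal I /\ forall h a, I a -> I (act h a).

(* H-prime: A/I <> 0 and the product of two nonzero H-ideals of A/I is    *)
(* nonzero; H-ideals of A/I = H-ideals of A containing I.                *)
Definition is_H_prime (I : A -> Prop) : Prop :=
  [/\ is_H_ideal I, ~ I 1 &
      forall J K, is_H_ideal J -> is_H_ideal K -> incl I J -> incl I K ->
        prod_sub J K I -> incl J I \/ incl K I].

Definition colonH (P : A -> Prop) : A -> Prop := fun a => forall h, P (act h a).

Definition kappa_surjective : Prop :=
  forall I, is_H_prime I ->
    exists P, is_prime_ideal P /\ forall a, colonH P a <-> I a.

Definition H_locally_closed (I : A -> Prop) : Prop :=
  is_H_prime I /\
  exists a, ~ I a /\
    forall J, is_H_prime J -> incl I J -> (exists b, J b /\ ~ I b) -> J a.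

Definition H_primitive (I : A -> Prop) : Prop :=
  exists P, is_primitive_ideal P /\ forall a, I a <-> colonH P a.

(* H-rational: I is H-prime and C^H(A/I) is algebraic over k; A/I is given *)
(* by any surjective H-equivariant k-algebra map pi : A -> B with kernel I. *)
Definition H_rational (I : A -> Prop) : Prop :=
  is_H_prime I /\
  forall (B : algType k) (actB : H -> B -> B) (pi : A -> B),
    (forall (c : k) a b, pi (c *: a + b) = c *: pi a + pi b) ->
    (forall a b, pi (a * b) = pi a * pi b) -> pi 1 = 1 ->
    (forall b, exists a, pi a = b) ->
    (forall a, pi a = 0 <-> I a) ->
    (forall h a, pi (act h a) = actB h (pi a)) ->
    CH_algebraic actB.
End HRings.

Definition End_eval (k : fieldType) (A : algType k) (V : lmodType A)
    (p : {poly k}) (phi : V -> V) (v : V) : V :=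
  \sum_(i < size p) ((p`_i)%:A : A) *: iter i phi v.

Definition weak_Nullstellensatz (k : fieldType) (A : algType k) : Prop :=
  forall V : lmodType A, irreducible_module V ->
    forall phi : V -> V,
      (forall x y, phi (x + y) = phi x + phi y) ->
      (forall (a : A) x, phi (a *: x) = a *: phi x) ->
      exists p : {poly k}, p != 0 /\ forall v, End_eval p phi v = 0.

(* Main.v *)
Require Import Defs.
From mathcomp Require Import all_boot all_order all_algebra.
From Stdlib Require Import Classical IndefiniteDescription FunctionalExtensionality PropExtensionality.
Set Implicit Arguments. Unset Strict Implicit. Unset Printing Implicit Defensive.
Import GRing.Theory.
Local Open Scope ring_scope.

Section Lin.
Variables (k : fieldType) (U W : lmodType k) (f : U -> W).
Hypothesis fL : forall (c : k) x y, f (c *: x + y) = c *: f x + f y.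
Lemma lin0 : f 0 = 0.
Proof.
have h := fL 1 0 0; rewrite !scale1r addr0 in h.
by apply: (@addrI _ (f 0)); rewrite addr0 -h.
Qed.
Lemma linD x y : f (x + y) = f x + f y.
Proof. by have := fL 1 x y; rewrite !scale1r. Qed.
Lemma linZ c x : f (c *: x) = c *: f x.
Proof. by have := fL c x 0; rewrite !addr0 lin0 addr0. Qed.
Lemma linN x : f (- x) = - f x.
Proof. by rewrite -scaleN1r linZ scaleN1r. Qed.
Lemma linB x y : f (x - y) = f x - f y.
Proof. by rewrite linD linN. Qed.
Lemma lin_sum n (F : nat -> U) : f (\sum_(i < n) F i) = \sum_(i < n) f (F i).
Proof.
elim: n => [|n IH]; first by rewrite !big_ord0 lin0.
by rewrite !big_ord_recr /= linD IH.
Qed.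
End Lin.

Section RingL.
Variable R : pzRingType.
Implicit Types I J : R -> Prop.

Lemma ideal_sum I (T : eqType) (s : seq T) (F : T -> R) :
  is_ideal I -> (forall p, p \in s -> I (F p)) -> I (\sum_(p <- s) F p).
Proof.
case=> I0 ID _; elim: s => [|a s IH] H; first by rewrite big_nil.
rewrite big_cons; apply: ID; first by apply: H; rewrite inE eqxx.
by apply: IH => p ps; apply: H; rewrite inE ps orbT.
Qed.

Lemma ideal_sum_ord I n (F : nat -> R) :
  is_ideal I -> (forall i, (i < n)%N -> I (F i)) -> I (\sum_(i < n) F i).
Proof.
move=> hI H; rewrite -(big_map (fun i : 'I_n => nat_of_ord i) xpredT F).
apply: ideal_sum => // p /mapP [i _ ->]; exact: H.
Qed.

Lemma ideal_mull I a x : is_ideal I -> I x -> I (a * x).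
Proof. by case=> _ _ h /(h a) []. Qed.
Lemma ideal_mulr I a x : is_ideal I -> I x -> I (x * a).
Proof. by case=> _ _ h /(h a) []. Qed.
Lemma ideal_add I x y : is_ideal I -> I x -> I y -> I (x + y).
Proof. by case=> _ h _; apply: h. Qed.
Lemma ideal0 I : is_ideal I -> I 0.
Proof. by case. Qed.
Lemma ideal_opp I x : is_ideal I -> I x -> I (- x).
Proof. by move=> hI hx; rewrite -mulN1r; apply: ideal_mull. Qed.
Lemma ideal_sub I x y : is_ideal I -> I x -> I y -> I (x - y).
Proof. by move=> hI hx hy; apply: ideal_add => //; apply: ideal_opp. Qed.

Lemma dense_True : dense_ideal (fun _ : R => True).
Proof.
split.
- by split=> // a x _.
- by move=> x /(_ 1 I); rewrite mulr1.
- by move=> x /(_ 1 I); rewrite mul1r.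
Qed.

Lemma iprod_single I J x y : I x -> J y -> iprod I J (x * y).
Proof.
move=> hx hy; exists [:: (x, y)]; split; last by rewrite big_seq1.
by move=> p; rewrite inE => /eqP ->.
Qed.

Lemma iprod_ideal I J : is_ideal I -> is_ideal J -> is_ideal (iprod I J).
Proof.
move=> hI hJ; split.
- by exists [::]; split => //; rewrite big_nil.
- move=> x y [s [hs ->]] [t [ht ->]]; exists (s ++ t); split; last by rewrite big_cat.
  by move=> p; rewrite mem_cat => /orP [/hs|/ht].
- move=> a x [s [hs ->]]; split.
  + exists [seq (a * p.1, p.2) | p <- s]; split.
      by move=> p /mapP [q /hs [h1 h2] ->]; split => //=; apply: ideal_mull.
    by rewrite big_map mulr_sumr; apply: eq_bigr => p _; rewrite mulrA.
  + exists [seq (p.1, p.2 * a) | p <- s]; split.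
      by move=> p /mapP [q /hs [h1 h2] ->]; split => //=; apply: ideal_mulr.
    by rewrite big_map mulr_suml; apply: eq_bigr => p _; rewrite mulrA.
Qed.

Lemma iprod_dense I J : dense_ideal I -> dense_ideal J -> dense_ideal (iprod I J).
Proof.
case=> hI dI1 dI2 [hJ dJ1 dJ2]; split; first exact: iprod_ideal.
- move=> x H; apply: dI1 => y Iy; apply: dJ1 => z Jz.
  by rewrite -mulrA; apply: H; apply: iprod_single.
- move=> x H; apply: dJ2 => z Jz; apply: dI2 => y Iy.
  by rewrite mulrA; apply: H; apply: iprod_single.
Qed.

Lemma iprod_subl I J : is_ideal I -> incl (iprod I J) I.
Proof.
move=> hI x [s [hs ->]]; apply: ideal_sum => // p /hs [h1 _]; exact: ideal_mulr.
Qed.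
Lemma iprod_subr I J : is_ideal J -> incl (iprod I J) J.
Proof.
move=> hJ x [s [hs ->]]; apply: ideal_sum => // p /hs [_ h2]; exact: ideal_mull.
Qed.
Lemma iprod_mono I J I' J' : incl I I' -> incl J J' -> incl (iprod I J) (iprod I' J').
Proof.
move=> h1 h2 x [s [hs ->]]; exists s; split => // p /hs [a b]; split; auto.
Qed.
End RingL.

Section Prim.
Variable R : pzRingType.
Lemma ann_ideal (V : lmodType R) : is_ideal (annihilator V).
Proof.
split.
- by move=> v; rewrite scale0r.
- by move=> x y hx hy v; rewrite scalerDl hx hy addr0.
- by move=> a x hx; split => v; rewrite -scalerA ?hx ?scaler0.
Qed.

Lemma prim_prime (P : R -> Prop) : is_primitive_ideal P -> is_prime_ideal P.
Proof.
case=> V [[[v0 v0n] irr] hP].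
have hI : is_ideal P.
  have [h1 h2 h3] := ann_ideal V; split.
  - by apply/hP.
  - by move=> x y /hP hx /hP hy; apply/hP; apply: h2.
  - by move=> a x /hP hx; have [u w] := h3 a x hx; split; apply/hP.
split => //.
- by move/hP => /(_ v0); rewrite scale1r => e; move: v0n; rewrite e eqxx.
- move=> I J hI' hJ hIJ; case: (classic (incl I P)) => [|nIP]; [by left|right].
  have [x Hx] := not_all_ex_not _ _ nIP.
  have [Ix nPx] := imply_to_and _ _ Hx.
  have [v Hv] : exists v : V, x *: v <> 0.
    apply NNPP => hn; apply: nPx; apply: (proj2 (hP x)) => v.
    by apply NNPP => e; apply: hn; exists v.
  pose W := fun w : V => forall x, I x -> x *: w = 0.
  have sW : is_submodule W.
    split.
    - by move=> ? _; rewrite scaler0.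
    - by move=> a b ha hb z Iz; rewrite scalerDr ha // hb // addr0.
    - move=> a w hw z Iz; rewrite scalerA; apply: hw; exact: ideal_mulr.
  case: (irr W sW) => [W0|Wall]; last by case: Hv; apply: Wall.
  move=> y Jy; apply/hP => w; apply: W0 => z Iz.
  by rewrite scalerA; move/hP: (hIJ z y Iz Jy); apply.
Qed.
End Prim.

Section HAct.
Variables (k : fieldType) (H : algType k) (Delta : H -> seq (H * H)) (eps : H -> k)
  (A : algType k) (act : H -> A -> A).
Hypothesis MA : module_algebra Delta eps act.

Lemma act_lin h : forall (c : k) x y, act h (c *: x + y) = c *: act h x + act h y.
Proof. by move=> c x y; rewrite (act_linear_r MA). Qed.

Lemma colonH_Hprime Q : is_prime_ideal Q -> is_H_prime act (colonH act Q).
Proof.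
case=> hQ nQ1 pQ.
have hC : is_H_ideal act (colonH act Q).
  split; first split.
  - by move=> h; rewrite (lin0 (act_lin h)); apply: ideal0.
  - by move=> x y hx hy h; rewrite (linD (act_lin h)); apply: ideal_add.
  - move=> a x hx; split => h; rewrite (act_prod MA); apply: ideal_sum => // p _.
      exact: ideal_mull.
    exact: ideal_mulr.
  - by move=> h a ha g; rewrite -(act_mul MA).
split => //.
- by move/(_ 1); rewrite (act_one MA).
- move=> J K [hJ sJ] [hK sK] _ _ hJK.
  have : prod_sub J K Q by move=> x y Jx Ky; have := hJK x y Jx Ky 1; rewrite (act_one MA).
  case/(pQ J K hJ hK) => sub; [left|right] => x hx h; apply: sub; auto.
Qed.

Lemma partA : (kappa_surjective act /\ Jacobson_property A) ->
     forall I, H_locally_closed act I -> H_primitive act I.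
Proof.
case=> kap jac I [HI [a [nIa Ha]]].
have [P [pP eP]] := kap I HI.
have [h nPh] : exists h, ~ P (act h a).
  by apply NNPP => hn; apply: nIa; apply/eP => h; apply NNPP => e; apply: hn; exists h.
have [Q HQ] : exists Q, ~ (is_primitive_ideal Q -> incl P Q -> Q (act h a)).
  by apply NNPP => hn; apply: nPh; apply: (jac P pP) => Q pQ iPQ; apply NNPP => e; apply: hn; exists Q => f; apply: e; apply: f.
have [pQ HQ'] := imply_to_and _ _ HQ.
have [iPQ nQ] := imply_to_and _ _ HQ'.
exists Q; split => // x; split.
- by move/eP => hx g; apply: iPQ.
- move=> hx; apply NNPP => nIx.
  have : colonH act Q a.
    apply: Ha; first exact: colonH_Hprime (prim_prime pQ).
    - by move=> y /eP hy g; apply: iPQ.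
    - by exists x.
  by move/(_ h).
Qed.
End HAct.

Lemma qemb_ok (R : pzRingType) (r : R) : qrep_ok (qemb r).
Proof.
split; first exact: dense_True.
split => /=.
- by move=> x y _ _; rewrite mulrDl.
- by move=> r' x _; rewrite mulrA.
- by move=> x y _ _; rewrite mulrDr.
- by move=> r' x _; rewrite mulrA.
- by move=> x y _ _; rewrite mulrA.
Qed.

Section PartB.
Variables (k : fieldType) (H : algType k) (Delta : H -> seq (H * H)) (eps : H -> k)
  (A : algType k) (act : H -> A -> A).
Hypothesis MA : module_algebra Delta eps act.
Variables (P : A -> Prop) (V : lmodType A).
Hypothesis irrV : irreducible_module V.
Hypothesis hP : forall a, P a <-> annihilator V a.
Variable I : A -> Prop.
Hypothesis hI : forall a, I a <-> colonH act P a.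
Hypothesis WN : weak_Nullstellensatz A.
Variables (B : algType k) (actB : H -> B -> B) (pi : A -> B).
Hypothesis piL : forall (c : k) a b, pi (c *: a + b) = c *: pi a + pi b.
Hypothesis piM : forall a b, pi (a * b) = pi a * pi b.
Hypothesis pi1 : pi 1 = 1.
Hypothesis piS : forall b, exists a, pi a = b.
Hypothesis piK : forall a, pi a = 0 <-> I a.
Hypothesis piA : forall h a, pi (act h a) = actB h (pi a).
Variable q : qrep B.
Hypothesis CHq : CH actB q.

Definition lift (b : B) : A := proj1_sig (constructive_indefinite_description _ (piS b)).
Lemma liftK b : pi (lift b) = b.
Proof. exact: proj2_sig (constructive_indefinite_description _ (piS b)). Qed.

Lemma I_P a : I a -> P a.
Proof. by move/hI/(_ 1); rewrite (act_one MA). Qed.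

Definition bact (b : B) (w : V) : V := lift b *: w.

Lemma bactE a b w : pi a = b -> bact b w = a *: w.
Proof.
move=> e; apply/eqP; rewrite -subr_eq0 /bact -scalerBl; apply/eqP.
have : I (lift b - a) by apply/piK; rewrite (linB piL) liftK e subrr.
by move/I_P/hP; apply.
Qed.

Lemma bactD b1 b2 w : bact (b1 + b2) w = bact b1 w + bact b2 w.
Proof.
rewrite (@bactE (lift b1 + lift b2)); first by rewrite scalerDl.
by rewrite (linD piL) !liftK.
Qed.
Lemma bactM b1 b2 w : bact (b1 * b2) w = bact b1 (bact b2 w).
Proof.
rewrite (@bactE (lift b1 * lift b2)); first by rewrite /bact scalerA.
by rewrite piM !liftK.
Qed.
Lemma bactZ c b w : bact (c *: b) w = (c%:A : A) *: bact b w.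
Proof.
rewrite (@bactE (c *: lift b)); first by rewrite /bact scalerA mulr_algl.
by rewrite (linZ piL) liftK.
Qed.
Lemma bact0 w : bact 0 w = 0.
Proof. by rewrite (@bactE 0) ?scale0r // (lin0 piL). Qed.
Lemma bactw0 b : bact b 0 = 0.
Proof. by rewrite /bact scaler0. Qed.
Lemma bactwD b w1 w2 : bact b (w1 + w2) = bact b w1 + bact b w2.
Proof. by rewrite /bact scalerDr. Qed.
Lemma bact_sum n (F : nat -> B) w : bact (\sum_(i < n) F i) w = \sum_(i < n) bact (F i) w.
Proof.
elim: n => [|n IH]; first by rewrite !big_ord0 bact0.
by rewrite !big_ord_recr /= bactD IH.
Qed.
Lemma bact_pi a w : bact (pi a) w = a *: w.
Proof. exact: bactE. Qed.

Lemma actBL h (c : k) x y : actB h (c *: x + y) = c *: actB h x + actB h y.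
Proof.
have [a <-] := piS x; have [b <-] := piS y.
by rewrite -piL -!piA (act_linear_r MA) piL.
Qed.

Notation K := (qdom q).
Notation phi := (qright q).
Notation psi := (qleft q).

Lemma okq : qrep_ok q.
Proof. by case: CHq => [[]]. Qed.
Lemma Kd : dense_ideal K.
Proof. by case: okq. Qed.
Lemma Ki : is_ideal K.
Proof. by case: Kd. Qed.
Lemma phiD x y : K x -> K y -> phi (x + y) = phi x + phi y.
Proof. by case: okq => _ [h1 h2 h3 h4 h5]; apply: h1. Qed.
Lemma phiMl r x : K x -> phi (r * x) = r * phi x.
Proof. by case: okq => _ [h1 h2 h3 h4 h5]; apply: h2. Qed.
Lemma psiMr r x : K x -> psi (x * r) = psi x * r.
Proof. by case: okq => _ [h1 h2 h3 h4 h5]; apply: h4. Qed.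
Lemma compat x y : K x -> K y -> phi x * y = x * psi y.
Proof. by case: okq => _ [h1 h2 h3 h4 h5]; apply: h5. Qed.

Lemma cen_r r : exists L, [/\ dense_ideal L, incl L K &
  forall x, L x -> phi x * r = phi (x * r) /\ psi (r * x) = r * psi x].
Proof.
case: CHq => [[_ cen] _].
have [L [dL _ sL eL]] := cen _ (qemb_ok r).
exists L; split => //.
by move=> x /sL /= /iprod_subl; apply; exact: Ki.
Qed.

Lemma phiMr r x : K x -> phi (x * r) = phi x * r.
Proof.
move=> Kx; have [L [[iL dL1 dL2] sL eL]] := cen_r r.
apply/eqP; rewrite -subr_eq0; apply/eqP; apply: dL1 => z Lz.
have Kz := sL _ Lz.
have Kxr : K (x * r) by apply: ideal_mulr => //; exact: Ki.
have Krz : K (r * z) by apply: ideal_mull => //; exact: Ki.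
rewrite mulrBl (compat Kxr Kz).
rewrite -(mulrA (phi x)) (compat Kx Krz) (eL z Lz).2 mulrA.
by rewrite subrr.
Qed.

Lemma psiMl r y : K y -> psi (r * y) = r * psi y.
Proof.
move=> Ky; have [L [[iL dL1 dL2] sL eL]] := cen_r r.
apply/eqP; rewrite -subr_eq0; apply/eqP; apply: dL2 => z Lz.
have Kz := sL _ Lz.
have Kry : K (r * y) by apply: ideal_mull => //; exact: Ki.
have Kzr : K (z * r) by apply: ideal_mulr => //; exact: Ki.
rewrite mulrBr -(compat Kz Kry) mulrA (eL z Lz).1 (compat Kzr Ky) mulrA.
by rewrite subrr.
Qed.

Lemma psi_phi x : K x -> psi x = phi x.
Proof.
move=> Kx; have [iK dK1 dK2] := Kd.
apply/eqP; rewrite -subr_eq0; apply/eqP; apply: dK1 => z Kz.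
by rewrite mulrBl -psiMr // psiMl // (compat Kx Kz) subrr.
Qed.

Lemma compat2 x y : K x -> K y -> phi x * y = x * phi y.
Proof. by move=> Kx Ky; rewrite compat // psi_phi. Qed.

Lemma phiZ c x : K x -> phi (c *: x) = c *: phi x.
Proof. by move=> Kx; rewrite -mulr_algl phiMl // mulr_algl. Qed.


Definition wit (e t : B) := (forall x, K x -> phi (x * e) = x * t) /\
  (forall y, K y -> t * y = e * phi y).

Lemma KxK x : K x -> iprod K (fun _ => True) x.
Proof. by move=> Kx; rewrite -[x]mulr1; apply: iprod_single. Qed.

Lemma wit_K x : K x -> wit x (phi x).
Proof. by move=> Kx; split => y Ky; [apply: phiMl | apply: compat2]. Qed.

Lemma wit_mulr e t r : wit e t -> wit (e * r) (t * r).
Proof.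
case=> w1 w2; split.
- move=> x Kx; rewrite mulrA phiMr ?w1 ?mulrA //; apply: ideal_mulr => //; exact: Ki.
- move=> y Ky; rewrite -mulrA w2; last by apply: ideal_mull => //; exact: Ki.
  by rewrite phiMl // mulrA.
Qed.

Lemma wit_key e t e0 t0 r : wit e t -> wit e0 t0 -> e * r * t0 = t * r * e0.
Proof.
case=> w1 w2 [v1 v2]; have [iK dK1 dK2] := Kd.
apply/eqP; rewrite -subr_eq0; apply/eqP; apply: dK2 => z Kz.
have Kze : K (z * e) by apply: ideal_mulr.
have Kzer : K (z * e * r) by apply: ideal_mulr.
rewrite mulrBr !mulrA -v1 // -(w1 z Kz) -!phiMr //.
by rewrite ?mulrA subrr.
Qed.

Lemma Dq_wit e t : wit e t -> Dq q e.
Proof.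
case=> w1 w2; have [iK dK1 dK2] := Kd.
split => r.
- exists (r * t); exists K; split => //.
  + move=> x Kx /=; rewrite -[x]mul1r; apply: iprod_single => //.
    rewrite -[x]mul1r; exact: iprod_single.
  + move=> x Kx /=; split.
      by rewrite -phiMr // -phiMr ?w1 ?mulrA //; apply: ideal_mulr.
    rewrite psiMl; last by apply: ideal_mull.
    by rewrite psi_phi ?phiMl -?w2 ?mulrA //; apply: ideal_mull.
- exists (t * r); exists K; split => //.
  + move=> x Kx /=; rewrite -[x]mulr1; apply: iprod_single => //.
    rewrite -[1]mulr1; exact: iprod_single.
  + move=> x Kx /=; split.
      by rewrite phiMr ?w1 ?mulrA //; apply: ideal_mulr.
    by rewrite psi_phi // -phiMl // -mulrA w2 //; apply: ideal_mull.
Qed.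

Lemma wit_act h e t : wit e t -> wit (actB h e) (actB h t).
Proof.
move=> we; have D := Dq_wit we; case: we => w1 w2.
have [iK dK1 dK2] := Kd.
case: CHq => _ /(_ h e D) [/(_ t) C _].
have [L [[iL dL1 dL2] _ sL eL]] : qeq (qemb (actB h t)) (qmul (qemb (actB h e)) q).
  apply: C; exists K; split => //.
  - by move=> x Kx /=; apply: KxK.
  - move=> x Kx /=; split; first by rewrite w1.
    by rewrite psi_phi // w2.
have sLK : incl L K by move=> x /sL /= /iprod_subl; apply.
split.
- move=> x Kx; apply/eqP; rewrite -subr_eq0; apply/eqP; apply: dL2 => z Lz.
  have Kz := sLK _ Lz.
  rewrite mulrBr -phiMl; last by apply: ideal_mulr.
  have Lzx : L (z * x) by apply: ideal_mulr.
  have /= e1 := (eL _ Lzx).1.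
  by rewrite !mulrA -e1 subrr.
- move=> y Ky; apply/eqP; rewrite -subr_eq0; apply/eqP; apply: dL1 => z Lz.
  have Kz := sLK _ Lz.
  have Lyz : L (y * z) by apply: ideal_mull.
  have Kyz := sLK _ Lyz.
  have /= e1 := (eL _ Lyz).2.
  by rewrite mulrBl -mulrA e1 psi_phi // phiMr // -mulrA subrr.
Qed.

Lemma bactB b1 b2 w : bact (b1 - b2) w = bact b1 w - bact b2 w.
Proof.
have [a1 <-] := piS b1; have [a2 <-] := piS b2.
by rewrite -(linB piL) !bact_pi scalerBl.
Qed.

Lemma nzV : exists v : V, v <> 0.
Proof. by case: irrV => [[v /eqP hv] _]; exists v. Qed.

Lemma M1 : exists e0 t0 a0 (v0 : V), [/\ wit e0 t0, pi a0 = e0 & a0 *: v0 <> 0].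
Proof.
apply: NNPP => hn.
have K0 : forall x, K x -> x = 0.
  move=> x Kx; rewrite -(liftK x); apply/piK/hI => g; apply/hP => v.
  apply: NNPP => hv; apply: hn.
  exists (actB g x), (actB g (phi x)), (act g (lift x)), v; split => //.
  - by apply: wit_act; apply: wit_K.
  - by rewrite piA liftK.
have [iK dK1 dK2] := Kd.
have e1 : (1 : B) = 0 by apply: dK1 => y Ky; rewrite mul1r; apply: K0.
have : P 1 by apply: I_P; apply/piK; rewrite pi1.
move/hP => h1; have [v vn] := nzV; apply: vn; by rewrite -(h1 v) scale1r.
Qed.

Section WithE.
Variables (e0 t0 : B) (a0 : A) (v0 : V).
Hypotheses (we0 : wit e0 t0) (pe0 : pi a0 = e0) (nv0 : a0 *: v0 <> 0).

Definition u0 := a0 *: v0.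

Lemma allu v : exists a, v = a *: u0.
Proof.
pose W := fun v : V => exists a, v = a *: u0.
have sW : is_submodule W.
  split.
  - by exists 0; rewrite scale0r.
  - by move=> x y [a ->] [b ->]; exists (a + b); rewrite scalerDl.
  - by move=> a x [b ->]; exists (a * b); rewrite scalerA.
case: (proj2 irrV W sW) => [W0|]; last by apply.
by case: nv0; apply: W0; exists 1; rewrite scale1r.
Qed.

Definition alpha (v : V) : A := proj1_sig (constructive_indefinite_description _ (allu v)).
Lemma alphaK v : v = alpha v *: u0.
Proof. exact: proj2_sig (constructive_indefinite_description _ (allu v)). Qed.

Definition phiV (v : V) : V := bact (pi (alpha v) * t0) v0.

Lemma bact_e0 : bact e0 v0 = u0.
Proof. by rewrite -pe0 bact_pi. Qed.

Lemma N0 w : (forall e t, wit e t -> bact e w = 0) -> w = 0.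
Proof.
move=> hw.
pose W := fun w : V => forall e t, wit e t -> bact e w = 0.
have sW : is_submodule W.
  split.
  - by move=> e t _; rewrite bactw0.
  - by move=> x y hx hy e t wt; rewrite bactwD (hx e t) // (hy e t) // addr0.
  - move=> a x hx e t wt; rewrite -bact_pi -bactM; apply: (hx _ (t * pi a)).
    exact: wit_mulr.
case: (proj2 irrV W sW) => [W0|Wall]; first by apply: W0.
by case: nv0; rewrite -[a0 *: v0]/u0 -bact_e0; apply: (Wall v0 e0 t0).
Qed.

Lemma WD a v : v = a *: u0 -> phiV v = bact (pi a * t0) v0.
Proof.
move=> ev; rewrite /phiV; apply/eqP; rewrite -subr_eq0 -bactB -mulrBl; apply/eqP.
apply: N0 => e t wt.
rewrite -bactM mulrA (wit_key _ wt we0) !bactM bact_e0 -(linB piL) bact_pi.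
by rewrite scalerBl -alphaK -ev subrr bactw0.
Qed.

Lemma phiVD x y : phiV (x + y) = phiV x + phiV y.
Proof.
rewrite (@WD (alpha x + alpha y)); last by rewrite scalerDl -!alphaK.
by rewrite (linD piL) mulrDl bactD.
Qed.

Lemma phiVZ (a : A) x : phiV (a *: x) = a *: phiV x.
Proof.
rewrite (@WD (a * alpha x)); last by rewrite -scalerA -alphaK.
by rewrite piM -mulrA bactM bact_pi.
Qed.

Lemma phiV_wit e t w : wit e t -> phiV (bact e w) = bact t w.
Proof.
move=> wt; rewrite (@WD (lift e * alpha w)); last first.
  by rewrite -scalerA -alphaK.
rewrite piM liftK (wit_key _ wt we0) !bactM bact_e0 bact_pi -alphaK //.
Qed.

Lemma phiV_iter (u : nat -> B) n w :
  (forall i, (i.+1 < n)%N -> wit (u i) (u i.+1)) ->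
  forall i, (i < n)%N -> iter i phiV (bact (u 0%N) w) = bact (u i) w.
Proof.
move=> hu; elim=> [|i IH] hi //=.
rewrite IH; last exact: ltnW.
exact: phiV_wit (hu _ hi).
Qed.

End WithE.

Definition qpevals (cs : seq k) : qrep B :=
  foldr (fun c acc => qadd (qmul acc q) (qemb (c%:A : B))) (qemb 0) cs.
Lemma qpevalE (p : {poly k}) : qpeval p q = qpevals p.
Proof. by []. Qed.

Fixpoint Kpow n : B -> Prop :=
  match n with 0 => fun _ => True | n'.+1 => iprod K (Kpow n') end.

Lemma Kpow_dense n : dense_ideal (Kpow n).
Proof. elim: n => [|n IH] /=; [exact: dense_True | exact: iprod_dense Kd IH]. Qed.

Lemma Kpow_dom cs : incl (Kpow (size cs)) (qdom (qpevals cs)).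
Proof.
elim: cs => [|c cs IH] x //= hx; split => //.
by apply: (iprod_mono _ IH) hx.
Qed.

Lemma phi0 : phi 0 = 0.
Proof. by rewrite -(mul0r 0) phiMl ?mul0r //; apply: ideal0; exact: Ki. Qed.

Lemma phi_sum (s : seq (B * B)) (F : B * B -> B) :
  (forall p, p \in s -> K (F p)) -> phi (\sum_(p <- s) F p) = \sum_(p <- s) phi (F p).
Proof.
elim: s => [|a s IH] hs; first by rewrite !big_nil phi0.
rewrite !big_cons phiD ?IH //.
- by move=> p ps; apply: hs; rewrite inE ps orbT.
- by apply: hs; rewrite inE eqxx.
- by apply: ideal_sum; [exact: Ki | move=> p ps; apply: hs; rewrite inE ps orbT].
Qed.

Lemma Kpow_phi n x : Kpow n.+1 x -> Kpow n (phi x).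
Proof.
case=> s [hs ->]; rewrite phi_sum; last first.
  by move=> p /hs [h1 _]; apply: ideal_mulr => //; exact: Ki.
have [iP _ _] := Kpow_dense n.
apply: ideal_sum => // p /hs [h1 h2]; rewrite phiMr //; exact: ideal_mull.
Qed.

Lemma Kpow_iter n x : Kpow n x -> forall i, (i < n)%N -> K (iter i phi x).
Proof.
elim: n x => [|n IH] x hx [|i] hi //=.
- by apply: (iprod_subl Ki) hx.
- by rewrite -iterS iterSr; apply: IH => //; exact: Kpow_phi.
Qed.

Lemma phi_sum_ord n (F : nat -> B) : (forall i, (i < n)%N -> K (F i)) ->
  phi (\sum_(i < n) F i) = \sum_(i < n) phi (F i).
Proof.
elim: n => [|n IH] hF; first by rewrite !big_ord0 phi0.
rewrite !big_ord_recr /= phiD ?IH //.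
- by move=> i hi; apply: hF; exact: ltnW.
- apply: ideal_sum_ord; first exact: Ki.
  by move=> i hi; apply: hF; exact: ltnW.
- exact: hF.
Qed.

Lemma Rform cs x : (forall i, (i < size cs)%N -> K (iter i phi x)) ->
  qright (qpevals cs) x = \sum_(i < size cs) cs`_i *: iter i phi x.
Proof.
elim: cs => [|c cs IH] hx /=; first by rewrite big_ord0 mulr0.
rewrite IH; last by move=> i hi; apply: hx; exact: ltnW.
rewrite (@phi_sum_ord _ (fun i => cs`_i *: iter i phi x)); last first.
  move=> i hi; rewrite -mulr_algl; apply: ideal_mull; first exact: Ki.
  by apply: hx; exact: ltnW.
rewrite big_ord_recl /= mulr_algr addrC; congr (_ + _).
apply: eq_bigr => i _; rewrite phiZ //; apply: hx.
exact: ltnW (ltn_ord i).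
Qed.

Lemma Lform cs y : qleft (qpevals cs) y = \sum_(i < size cs) cs`_i *: iter i psi y.
Proof.
elim: cs y => [|c cs IH] y /=; first by rewrite big_ord0 mul0r.
rewrite IH big_ord_recl /= mulr_algl addrC; congr (_ + _).
by apply: eq_bigr => i _; rewrite add0n -iterS iterSr.
Qed.

Lemma psi_iter x n : (forall i, (i < n)%N -> K (iter i phi x)) ->
  forall i, (i < n)%N -> iter i psi x = iter i phi x.
Proof.
move=> hK; elim=> [|i IH] hi //=.
by rewrite IH ?psi_phi //; [apply: hK | ]; exact: ltnW.
Qed.

Theorem partB_main : exists p : {poly k}, p != 0 /\ qeq (qpeval p q) (qemb 0).
Proof.
have [e0 [t0 [a0 [v0 [we0 pe0 nv0]]]]] := M1.
have [p [pn Hp]] := WN irrV (phiVD we0 pe0 nv0) (phiVZ we0 pe0 nv0).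
have chain0 : forall u : nat -> B, (forall i, (i.+1 < size p)%N -> wit (u i) (u i.+1)) ->
    \sum_(i < size p) p`_i *: u i = 0.
  have annY : forall u : nat -> B, (forall i, (i.+1 < size p)%N -> wit (u i) (u i.+1)) ->
      forall w, bact (\sum_(i < size p) p`_i *: u i) w = 0.
    move=> u hu w; rewrite (@bact_sum (size p) (fun i => p`_i *: u i) w).
    transitivity (End_eval p (phiV t0 nv0) (bact (u 0%N) w)); last exact: Hp.
    have E : forall f v, End_eval p f v = \sum_(i < size p) ((p`_i)%:A : A) *: iter i f v.
      by [].
    rewrite E; apply: eq_bigr => i _; rewrite bactZ (phiV_iter we0 pe0 nv0 w hu) //.
  move=> u hu; set y := \sum_(i < size p) _.
  rewrite -(liftK y); apply/piK/hI => g; apply/hP => v.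
  rewrite -bact_pi piA liftK /y (lin_sum (actBL g) (size p) (fun i => p`_i *: u i)).
  under eq_bigr => i _ do rewrite (linZ (actBL g)).
  apply: (annY (fun i => actB g (u i))) => i hi; apply: wit_act; exact: hu.
exists p; split => //; exists (Kpow (size p)); split.
- exact: Kpow_dense.
- exact: Kpow_dom.
- by [].
- move=> x hx; have hK := Kpow_iter hx.
  have hw : forall i, (i.+1 < size p)%N -> wit (iter i phi x) (iter i.+1 phi x).
    by move=> i hi; apply: wit_K; apply: hK; exact: ltnW.
  split.
  + by rewrite qpevalE (Rform hK) /= mulr0; apply: chain0.
  + rewrite qpevalE Lform /= mul0r.
    under eq_bigr => i _ do rewrite (psi_iter hK (ltn_ord i)).
    exact: chain0.
Qed.

End PartB.

Theorem lemma4p2 (k : fieldType) (H : algType k)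
    (Delta : H -> seq (H * H)) (eps : H -> k) (S : H -> H)
    (A : algType k) (act : H -> A -> A) :
  Hopf_axioms Delta eps S -> bijective S ->
  module_algebra Delta eps act ->
  ((kappa_surjective act /\ Jacobson_property A) ->
     forall I, H_locally_closed act I -> H_primitive act I) /\
  (weak_Nullstellensatz A ->
     forall I, H_primitive act I -> H_rational act I).
Proof.
move=> _ _ MA; split; first exact: partA MA.
move=> WN I [P [[V [irrV hP]] hI]].
have eI : I = colonH act P.
  apply: functional_extensionality => a; apply: propositional_extensionality; exact: hI.
split.
  rewrite eI; apply: (colonH_Hprime MA); apply: prim_prime; exists V; split => //.
move=> B actB pi piL piM pi1 piS piK piA q CHq.
exact: (partB_main MA irrV hP hI WN piL piM pi1 piS piK piA CHq).
Qed.
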